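(* Let $C_n=(V,E)$ be the cycle graph on $n\ge 3$ vertices. Then two distinct vertices $\mathbf v(X),\mathbf v(Y)$ of $\mathrm{CUT}(C_n)$ are adjacent if and only if $|\delta(X\triangle Y)|=2$ (equivalently, the Hamming distance between $\mathbf v(X)$ and $\mathbf v(Y)$ is $2$). Moreover, the 1-skeleton of $\mathrm{CUT}(C_n)$ contains a clique of size $n=|E|$; hence $\omega(\mathrm{CUT}(C_n))\ge |E|$.
   Context: For an undirected graph $G=(V,E)$ and $S\subseteq V$, $\delta(S)\subseteq E$ denotes the set of edges with exactly one endpoint in $S$, and $\mathbf v(S)\in\{0,1\}^{E}$ is its incidence vector ($v(S)_e=1$ iff $e\in\delta(S)$). The cut polytope is $\mathrm{CUT}(G)=\operatorname{conv}\{\mathbf v(S):S\subseteq V\}\subset\mathbb R^{E}$. The 1-skeleton of a polytope is the graph whose vertices are the polytope's vertices and whose edges are its one-dimensional faces; $\omega$ denotes its clique number. $X\triangle Y$ denotes symmetric difference. *)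

(* Defs.v *)
From HB Require Import structures.
From mathcomp Require Import all_boot all_order all_algebra.
From mathcomp Require Import reals.
Set Implicit Arguments. Unset Strict Implicit. Unset Printing Implicit Defensive.
Import Order.TTheory GRing.Theory Num.Theory.
Local Open Scope ring_scope.

(* Cycle graph C_n: vertex set 'I_n, edge set indexed by 'I_n,
   edge e joins vertex e and vertex (e+1 mod n). *)
Definition cnext (n : nat) (i : 'I_n) : 'I_n :=
  Ordinal (ltn_pmod i.+1 (leq_ltn_trans (leq0n i) (ltn_ord i))).

Definition cdelta (n : nat) (S : {set 'I_n}) : {set 'I_n} :=
  [set e : 'I_n | (e \in S) != (cnext e \in S)].

Definition cutvec (R : realType) (n : nat) (S : {set 'I_n}) : 'rV[R]_n :=
  \row_(e < n) (if e \in cdelta S then 1 else 0).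

Definition CUT (R : realType) (n : nat) (x : 'rV[R]_n) : Prop :=
  exists lam : {ffun {set 'I_n} -> R},
    (forall S, 0 <= lam S) /\ \sum_S lam S = 1 /\
    x = \sum_S lam S *: cutvec R S.

Definition dotv (R : realType) (n : nat) (c x : 'rV[R]_n) : R :=
  \sum_(i < n) c ord0 i * x ord0 i.

Definition is_face (R : realType) (n : nat) (Q F : 'rV[R]_n -> Prop) : Prop :=
  exists (c : 'rV[R]_n) (d : R),
    (forall x, Q x -> dotv c x <= d) /\
    (forall x, F x <-> (Q x /\ dotv c x = d)).

Definition is_vertex (R : realType) (n : nat) (Q : 'rV[R]_n -> Prop) (p : 'rV[R]_n) :=
  is_face Q (fun x => x = p).

Definition segment (R : realType) (n : nat) (a b : 'rV[R]_n) (x : 'rV[R]_n) : Prop :=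
  exists t : R, 0 <= t <= 1 /\ x = (1 - t) *: a + t *: b.

Definition adjacent (R : realType) (n : nat) (Q : 'rV[R]_n -> Prop) (a b : 'rV[R]_n) :=
  [/\ is_vertex Q a, is_vertex Q b, a <> b & is_face Q (segment a b)].

(* Main.v *)
Require Import Defs.
From HB Require Import structures.
From mathcomp Require Import all_boot all_order all_algebra.
From mathcomp Require Import reals.
From mathcomp Require Import zify ring lra.
Set Implicit Arguments. Unset Strict Implicit. Unset Printing Implicit Defensive.
Import Order.TTheory GRing.Theory Num.Theory.
Local Open Scope ring_scope.

Definition sd (n : nat) (A B : {set 'I_n}) := A :\: B :|: B :\: A.

Lemma in_sd n (A B : {set 'I_n}) x : (x \in sd A B) = ((x \in A) != (x \in B)).
Proof. by rewrite /sd !inE; case: (x \in A); case: (x \in B). Qed.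

Lemma cnextE n (i : 'I_n) : val (cnext i) = if i.+1 == n then 0%N else i.+1.
Proof.
rewrite /cnext /=; case: eqP => [->|h]; first by rewrite modnn.
by rewrite modn_small //; have := ltn_ord i; lia.
Qed.

Lemma cnext_inj n : injective (@cnext n).
Proof.
move=> i j /(congr1 val); rewrite !cnextE => h; apply/val_inj => /=.
have := ltn_ord i; have := ltn_ord j; move: h.
case: eqP; case: eqP => //=; lia.
Qed.

Lemma cdelta_sd n (A B : {set 'I_n}) : cdelta (sd A B) = sd (cdelta A) (cdelta B).
Proof.
apply/setP => e; rewrite /cdelta /sd !inE.
by case: (e \in A); case: (e \in B); case: (cnext e \in A); case: (cnext e \in B).
Qed.

Lemma card_cdelta_even n (S : {set 'I_n}) : ~~ odd #|cdelta S|.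
Proof.
have h1 : #|cdelta S| = (\sum_e ((e \in S) != (cnext e \in S)) : nat)%N.
  rewrite -sum1_card big_mkcond /=; apply: eq_bigr => e _; rewrite inE.
  by case: ((e \in S) != _).
have h2 : (\sum_e ((cnext e \in S) : nat) = \sum_e ((e \in S) : nat))%N.
  by rewrite [RHS](reindex_inj (@cnext_inj n)).
have h3 : (#|cdelta S| + 2 * \sum_e ((e \in S) && (cnext e \in S)) =
          \sum_e ((e \in S) : nat) + \sum_e ((cnext e \in S) : nat))%N.
  rewrite h1 big_distrr -!big_split /=; apply: eq_bigr => e _.
  by case: (e \in S); case: (cnext e \in S).
have : odd (#|cdelta S| + 2 * \sum_e ((e \in S) && (cnext e \in S))) = odd #|cdelta S|.
  by rewrite oddD oddM /= addbF.
by rewrite h3 h2 addnn -mul2n oddM => <-.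
Qed.

Definition itv (n : nat) (a b : nat) : {set 'I_n} := [set v : 'I_n | (a < v <= b)%N].
Arguments itv {n}.

Lemma in_cdelta_itv n (a b : nat) (e : 'I_n) : (a <= b)%N -> (b < n)%N ->
  (e \in cdelta (itv a b)) = ((a < b)%N && ((val e == a) || (val e == b))).
Proof.
move=> hab hbn; rewrite /cdelta /itv !inE cnextE; have := ltn_ord e.
case: ifP => /eqP h he; rewrite -[val e]/(nat_of_ord e); lia.
Qed.

Lemma sd_itv n (a b c : nat) : (a <= b)%N -> (b <= c)%N ->
  sd (itv a b : {set 'I_n}) (itv a c) = itv b c.
Proof. move=> h1 h2; apply/setP => e; rewrite in_sd /itv !inE; lia. Qed.

Lemma cutvecE (R : realType) n (S : {set 'I_n}) e :
  cutvec R S ord0 e = if e \in cdelta S then 1 else 0.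
Proof. by rewrite /cutvec mxE. Qed.

Lemma cutvec_eq (R : realType) n (S X : {set 'I_n}) :
  cdelta S = cdelta X -> cutvec R S = cutvec R X.
Proof. by rewrite /cutvec => ->. Qed.

Lemma dotv_sum (R : realType) n (c : 'rV[R]_n) (I : finType) (lam : I -> R) (F : I -> 'rV[R]_n) :
  dotv c (\sum_S lam S *: F S) = \sum_S lam S * dotv c (F S).
Proof.
rewrite /dotv; under eq_bigr => i _ do rewrite summxE mulr_sumr.
rewrite exchange_big; apply: eq_bigr => S _; rewrite mulr_sumr.
by apply: eq_bigr => i _; rewrite mxE mulrCA.
Qed.

Lemma dotvD (R : realType) n (c x y : 'rV[R]_n) : dotv c (x + y) = dotv c x + dotv c y.
Proof. by rewrite /dotv -big_split; apply: eq_bigr => i _; rewrite mxE mulrDr. Qed.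

Lemma dotvZ (R : realType) n (c x : 'rV[R]_n) r : dotv c (r *: x) = r * dotv c x.
Proof. by rewrite /dotv mulr_sumr; apply: eq_bigr => i _; rewrite mxE mulrCA. Qed.

Lemma CUT_valid (R : realType) n (c : 'rV[R]_n) d :
  (forall S, dotv c (cutvec R S) <= d) -> forall x, CUT x -> dotv c x <= d.
Proof.
move=> H x [lam [h0 [h1 ->]]]; rewrite dotv_sum.
have -> : d = \sum_S lam S * d by rewrite -mulr_suml h1 mul1r.
by apply: ler_sum => S _; apply: ler_wpM2l.
Qed.

Lemma CUT_cutvec (R : realType) n (X : {set 'I_n}) : CUT (cutvec R X).
Proof.
exists [ffun S => if S == X then 1 else 0]; split; [|split].
- by move=> S; rewrite ffunE; case: (S == X).
- rewrite (bigD1 X) //= ffunE eqxx big1 ?addr0 // => S hS.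
  by rewrite ffunE (negbTE hS).
- rewrite (bigD1 X) //= ffunE eqxx scale1r big1 ?addr0 // => S hS.
  by rewrite ffunE (negbTE hS) scale0r.
Qed.

Lemma CUT_seg (R : realType) n (X Y : {set 'I_n}) t : X != Y -> 0 <= t <= 1 ->
  CUT ((1 - t) *: cutvec R X + t *: cutvec R Y).
Proof.
move=> hXY /andP[t0 t1].
exists [ffun S => if S == X then 1 - t else if S == Y then t else 0]; split; [|split].
- by move=> S; rewrite ffunE; case: (S == X); case: (S == Y) => //; lra.
- rewrite (bigD1 X) //= (bigD1 Y) /=; last by rewrite eq_sym.
  rewrite !ffunE eqxx (negbTE (negbT (introF eqP _))); last by apply/eqP; rewrite eq_sym.
  rewrite eqxx big1 ?addr0; first by ring.
  by move=> S /andP[h1 h2]; rewrite ffunE (negbTE h1) (negbTE h2).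
- rewrite (bigD1 X) //= (bigD1 Y) /=; last by rewrite eq_sym.
  rewrite !ffunE eqxx (_ : (Y == X) = false); last by apply/negbTE; rewrite eq_sym.
  rewrite eqxx big1 ?addr0 //.
  by move=> S /andP[h1 h2]; rewrite ffunE (negbTE h1) (negbTE h2) scale0r.
Qed.

Lemma face_intro (R : realType) n (c : 'rV[R]_n) d (F : 'rV[R]_n -> Prop) :
  (forall S, dotv c (cutvec R S) <= d) ->
  (forall x, F x -> CUT x /\ dotv c x = d) ->
  (forall lam : {ffun {set 'I_n} -> R}, (forall S, 0 <= lam S) -> \sum_S lam S = 1 ->
      (forall S, lam S != 0 -> dotv c (cutvec R S) = d) ->
      F (\sum_S lam S *: cutvec R S)) ->
  is_face (@CUT R n) F.
Proof.
move=> Hv HF Hb; exists c, d; split; first exact: CUT_valid.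
move=> x; split; first exact: HF.
move=> [[lam [h0 [h1 hx]]] hd]; rewrite hx; apply: Hb => // S hS.
have hsum : \sum_S' lam S' * (d - dotv c (cutvec R S')) = 0.
  under eq_bigr => S' _ do rewrite mulrBr.
  by rewrite sumrB -mulr_suml h1 mul1r -dotv_sum -hx hd subrr.
have hge : forall S', predT S' -> 0 <= lam S' * (d - dotv c (cutvec R S')).
  by move=> S' _; rewrite mulr_ge0 // subr_ge0.
have /eqP := psumr_eq0P hge hsum (i:=S) isT.
by rewrite mulf_eq0 (negbTE hS) /= subr_eq0 => /eqP ->.
Qed.

Definition cfun (R : realType) n (X D : {set 'I_n}) : 'rV[R]_n :=
  \row_k (if k \in D then 0 else if k \in cdelta X then 1 else -1).
Definition dfun (R : realType) n (X D : {set 'I_n}) : R :=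
  \sum_k (if k \in D then 0 else if k \in cdelta X then 1 else 0).

Lemma cfun_le (R : realType) n (X D S : {set 'I_n}) :
  dotv (cfun R X D) (cutvec R S) <= dfun R X D.
Proof.
rewrite /dotv /dfun; apply: ler_sum => k _; rewrite !mxE.
by case: (k \in D); case: (k \in cdelta X); case: (k \in cdelta S); lra.
Qed.

Lemma cfun_eq (R : realType) n (X D S : {set 'I_n}) :
  dotv (cfun R X D) (cutvec R S) = dfun R X D <->
  (forall k, k \notin D -> (k \in cdelta S) = (k \in cdelta X)).
Proof.
split=> [h k hk | h].
- have hsum : \sum_k ((if k \in D then 0 else if k \in cdelta X then 1 else 0)
                 - cfun R X D ord0 k * cutvec R S ord0 k) = 0 :> R.
    by rewrite sumrB; rewrite /dotv /dfun in h; rewrite h subrr.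
  have hge : forall k, predT k -> 0 <= ((if k \in D then 0 else if k \in cdelta X then 1 else 0)
                 - cfun R X D ord0 k * cutvec R S ord0 k) :> R.
    move=> k' _; rewrite !mxE.
    by case: (k' \in D); case: (k' \in cdelta X); case: (k' \in cdelta S); lra.
  have := psumr_eq0P hge hsum (i:=k) isT.
  rewrite !mxE (negbTE hk).
  case: (k \in cdelta X); case: (k \in cdelta S) => //= h'; lra.
- rewrite /dotv /dfun; apply: eq_bigr => k _; rewrite !mxE.
  case hk: (k \in D); first by rewrite mul0r.
  rewrite h ?hk //; case: (k \in cdelta X); lra.
Qed.

Lemma vertex_cut (R : realType) n (X : {set 'I_n}) : is_vertex (@CUT R n) (cutvec R X).
Proof.
apply: (@face_intro R n (cfun R X set0) (dfun R X set0)).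
- by move=> S; apply: cfun_le.
- move=> x ->; split; first exact: CUT_cutvec.
  by apply/cfun_eq.
- move=> lam h0 h1 hS.
  transitivity (\sum_S lam S *: cutvec R X).
    apply: eq_bigr => S _; case: (eqVneq (lam S) 0) => [->|hl]; first by rewrite !scale0r.
    have /cfun_eq h := hS S hl; congr (_ *: _); apply: cutvec_eq.
    by apply/setP => k; rewrite h // inE.
  by rewrite -scaler_suml h1 scale1r.
Qed.

Lemma in_cdelta_sd n (A B : {set 'I_n}) k :
  (k \in cdelta (sd A B)) = ((k \in cdelta A) != (k \in cdelta B)).
Proof. by rewrite cdelta_sd in_sd. Qed.

Lemma seg_face (R : realType) n (X Y : {set 'I_n}) :
  #|cdelta (sd X Y)| = 2%N -> is_face (@CUT R n) (segment (cutvec R X) (cutvec R Y)).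
Proof.
move=> h2; set D := cdelta (sd X Y).
have hXY : X != Y.
  apply/eqP => E; move: h2; rewrite /D E.
  have -> : sd Y Y = set0 by apply/setP => k; rewrite in_sd inE eqxx.
  suff -> : cdelta (set0 : {set 'I_n}) = set0 by rewrite cards0.
  by apply/setP => k; rewrite !inE.
have hY : dotv (cfun R X D) (cutvec R Y) = dfun R X D.
  apply/cfun_eq => k; rewrite /D in_cdelta_sd.
  by case: (k \in cdelta X); case: (k \in cdelta Y).
have hX : dotv (cfun R X D) (cutvec R X) = dfun R X D by apply/cfun_eq.
apply: (@face_intro R n (cfun R X D) (dfun R X D)).
- by move=> S; apply: cfun_le.
- move=> x [t [ht ->]]; split; first exact: CUT_seg.
  by rewrite dotvD !dotvZ hX hY; ring.
- move=> lam h0 h1 hS.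
  have key : forall S, lam S != 0 -> cutvec R S != cutvec R Y -> cutvec R S = cutvec R X.
    move=> S hl hne; have /cfun_eq hk := hS S hl.
    set E := cdelta (sd S X).
    have hED : E \subset D.
      apply/subsetP => k; rewrite /E in_cdelta_sd => hk'.
      by apply/negPn/negP => /hk hh; move: hk'; rewrite hh eqxx.
    have hev := card_cdelta_even (sd S X).
    have hle := subset_leq_card hED; rewrite -/E h2 in hle.
    have : (#|E| == 0%N) || (#|E| == 2%N).
      move: hev hle; rewrite -/E; case: #|E| => [|[|[|m]]] //=.
    case/orP => /eqP hc.
    + apply: cutvec_eq; apply/setP => k.
      move: (cards0_eq hc) => /setP /(_ k); rewrite /E in_cdelta_sd in_set0.
      by case: (k \in cdelta S); case: (k \in cdelta X).
    + have /eqP hE : E == D by rewrite eqEcard hED h2 hc.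
      exfalso; move/negP: hne; apply; apply/eqP; apply: cutvec_eq; apply/setP => k.
      move: hE => /setP /(_ k); rewrite /E /D !in_cdelta_sd.
      by case: (k \in cdelta S); case: (k \in cdelta X); case: (k \in cdelta Y).
  pose t := \sum_S (if cutvec R S == cutvec R Y then lam S else 0).
  have h1t : 1 - t = \sum_S (if cutvec R S == cutvec R Y then 0 else lam S).
    rewrite -h1 /t -sumrB; apply: eq_bigr => S _; case: ifP => _; ring.
  exists t; split.
    apply/andP; split.
      by apply: sumr_ge0 => S _; case: ifP.
    rewrite -h1; apply: ler_sum => S _; case: ifP => // _.
  rewrite h1t /t !scaler_suml -big_split /=; apply: eq_bigr => S _.
  case: eqP => [->|hne]; first by rewrite scale0r add0r.
  case: (eqVneq (lam S) 0) => [->|hl]; first by rewrite !scale0r addr0.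
  by rewrite (key S hl) ?scale0r ?addr0 //; apply/eqP.
Qed.

Lemma adj_card (R : realType) n (X Y : {set 'I_n}) :
  adjacent (@CUT R n) (cutvec R X) (cutvec R Y) -> #|cdelta (sd X Y)| = 2%N.
Proof.
case=> _ _ hne [c [d [hval hF]]].
have hD0 : #|cdelta (sd X Y)| != 0%N.
  apply/eqP => /cards0_eq h0; apply: hne; apply: cutvec_eq; apply/setP => k.
  move/setP: h0 => /(_ k); rewrite in_cdelta_sd in_set0.
  by case: (k \in cdelta X); case: (k \in cdelta Y).
have hev := card_cdelta_even (sd X Y).
apply/eqP; apply/negPn/negP => h2.
have h3 : (2 < #|cdelta (sd X Y)|)%N.
  by move: hD0 hev h2; case: #|cdelta (sd X Y)| => [|[|[|m]]].
have [i hi] : exists i, i \in cdelta (sd X Y).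
  by apply/set0Pn; apply/eqP => h; move: h3; rewrite h cards0.
have [j hj] : exists j, j \in cdelta (sd X Y) :\ i.
  apply/set0Pn; apply/eqP => h; move: h3.
  by rewrite (cardsD1 i (cdelta (sd X Y))) hi h cards0.
have [k hk] : exists k, k \in cdelta (sd X Y) :\ i :\ j.
  apply/set0Pn; apply/eqP => h; move: h3.
  by rewrite (cardsD1 i (cdelta (sd X Y))) hi (cardsD1 j (cdelta (sd X Y) :\ i)) hj h cards0.
move: hj hk; rewrite !in_setD1 => /andP[hji hjD] /andP[hkj /andP[hki hkD]].
have hP : forall e : 'I_n,
    (e \in cdelta (itv (minn i j) (maxn i j))) = (e == i) || (e == j).
  move=> e; have := ltn_ord i; have := ltn_ord j; move: hji.
  rewrite -!val_eqE /= => hji hj' hi'.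
  rewrite in_cdelta_itv /=; lia.
have hsum : cutvec R (sd X (itv (minn i j) (maxn i j))) + cutvec R (sd Y (itv (minn i j) (maxn i j))) = cutvec R X + cutvec R Y.
  apply/matrixP => a e; rewrite !mxE !in_cdelta_sd hP.
  case: (boolP ((e == i) || (e == j))) => hij /=.
  - have : e \in cdelta (sd X Y) by case/orP: hij => /eqP ->.
    rewrite in_cdelta_sd.
    by case: (e \in cdelta X); case: (e \in cdelta Y) => //= _; rewrite addrC.
  - by case: (e \in cdelta X); case: (e \in cdelta Y).
have ht12 : 0 <= (1/2 : R) <= 1 by apply/andP; split; lra.
have [_ hm] := (hF ((1 - 1/2) *: cutvec R X + (1/2) *: cutvec R Y)).1
  (ex_intro _ (1/2) (conj ht12 erefl)).
have hX' := hval _ (CUT_cutvec R (sd X (itv (minn i j) (maxn i j)))).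
have hY' := hval _ (CUT_cutvec R (sd Y (itv (minn i j) (maxn i j)))).
have hs := congr1 (dotv c) hsum; rewrite !dotvD in hs.
rewrite dotvD !dotvZ in hm.
have hd : dotv c (cutvec R (sd X (itv (minn i j) (maxn i j)))) = d by lra.
have [t [_ ht]] := (hF (cutvec R (sd X (itv (minn i j) (maxn i j))))).2 (conj (CUT_cutvec R _) hd).
have ei := congr1 (fun M : 'rV[R]_n => M ord0 i) ht.
have ek := congr1 (fun M : 'rV[R]_n => M ord0 k) ht.
move: ei ek; rewrite /= !mxE !in_cdelta_sd !hP eqxx /= (negbTE hki) (negbTE hkj) /=.
move: hi hkD; rewrite !in_cdelta_sd.
case: (i \in cdelta X); case: (i \in cdelta Y); case: (k \in cdelta X); case: (k \in cdelta Y) => //= _ _; lra.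
Qed.

Lemma adj_of_card (R : realType) n (X Y : {set 'I_n}) :
  cutvec R X <> cutvec R Y -> #|cdelta (sd X Y)| = 2%N ->
  adjacent (@CUT R n) (cutvec R X) (cutvec R Y).
Proof. move=> hne hc; split; [exact: vertex_cut | exact: vertex_cut | exact: hne | exact: seg_face]. Qed.

Lemma card_itv2 n k l : (k < l)%N -> (l < n)%N -> #|cdelta (itv k l : {set 'I_n})| = 2%N.
Proof.
move=> hkl hln; have hk : (k < n)%N by lia.
rewrite (_ : cdelta _ = [set Ordinal hk; Ordinal hln]) ?cards2; last first.
  by apply/setP => e; rewrite in_cdelta_itv ?(ltnW hkl) // !inE -!val_eqE /=; lia.
by rewrite -val_eqE /=; lia.
Qed.

Lemma sdC n (A B : {set 'I_n}) : sd A B = sd B A.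
Proof. by rewrite /sd setUC. Qed.

Lemma cutvec_inj (R : realType) n (A B : {set 'I_n}) :
  cutvec R A = cutvec R B -> cdelta A = cdelta B.
Proof.
move=> e; apply/setP => x; have := congr1 (fun M : 'rV[R]_n => M ord0 x) e.
rewrite /= !mxE; case: (x \in cdelta A); case: (x \in cdelta B) => // /eqP;
  by rewrite ?oner_eq0 // eq_sym oner_eq0.
Qed.

Lemma key_kl (R : realType) n k l : (k < n)%N -> (l < n)%N -> k != l ->
  cutvec R (itv 0 k : {set 'I_n}) <> cutvec R (itv 0 l) /\
  #|cdelta (sd (itv 0 k : {set 'I_n}) (itv 0 l))| = 2%N.
Proof.
wlog: k l / (k < l)%N.
  move=> H hk hl hkl; case: (ltnP k l) => h; first exact: H.
  have h' : (l < k)%N by lia.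
  have hlk : l != k by rewrite eq_sym.
  have [h1 h2] := H l k h' hl hk hlk.
  by split; [move=> e; apply: h1; rewrite e | rewrite sdC].
move=> hkl hk hl _.
have hc : #|cdelta (sd (itv 0 k : {set 'I_n}) (itv 0 l))| = 2%N.
  rewrite sd_itv //; last by lia. exact: (card_itv2 (n:=n) hkl hl).
split=> // e; move: hc; rewrite cdelta_sd (cutvec_inj e).
by rewrite (_ : sd _ _ = set0) ?cards0 //; apply/setP => x; rewrite in_sd eqxx inE.
Qed.

Unset Implicit Arguments.

Theorem mainTheorem7 (R : realType) (n : nat) (hn : (3 <= n)%N) :
  (forall X Y : {set 'I_n},
      cutvec R X <> cutvec R Y ->
      (adjacent (@CUT R n) (cutvec R X) (cutvec R Y) <->
       #|cdelta (X :\: Y :|: Y :\: X)| = 2%N)) /\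
  (exists K : seq 'rV[R]_n,
      size K = n /\ uniq K /\
      (forall a, a \in K -> is_vertex (@CUT R n) a) /\
      (forall a b, a \in K -> b \in K -> a <> b -> adjacent (@CUT R n) a b)).
Proof.
split.
  move=> X Y hne; split; first exact: adj_card.
  exact: adj_of_card.
exists [seq cutvec R (itv 0 k : {set 'I_n}) | k <- iota 0 n].
split; first by rewrite size_map size_iota.
split.
  rewrite map_inj_in_uniq ?iota_uniq // => k l; rewrite !mem_iota /= => hk hl e.
  apply/eqP/negPn/negP => hkl.
  have hk' : (k < n)%N by lia.
  have hl' : (l < n)%N by lia.
  by have [] := key_kl R hk' hl' hkl.
split.
  by move=> a /mapP [k _ ->]; exact: vertex_cut.
move=> a b /mapP [k hk ->] /mapP [l hl ->] hne.
move: hk hl; rewrite !mem_iota /= => hk hl.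
have hkl : k != l by apply/eqP => e; apply: hne; rewrite e.
have hk' : (k < n)%N by lia.
have hl' : (l < n)%N by lia.
have [h1 h2] := key_kl R hk' hl' hkl.
exact: adj_of_card.
Qed.
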